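(* Let $\Lambda\subseteq\Sigma_A$ and $\Gamma\subseteq\Sigma_B$ be shift spaces. Suppose that $\Phi:\Lambda\to\Gamma$ is a map such that $\Phi(\mathcal O)=\mathcal O$ and such that $C_{\varepsilon}:=\Phi^{-1}(\mathcal O)$ is a finitely defined set in $\Lambda$. Then $\Phi$ is continuous and commutes with the shift map (i.e. $\Phi\circ\sigma=\sigma\circ\Phi$) if, and only if, $\Phi$ is a sliding block code given by $\bigl(\Phi(x)\bigr)_n=\sum_{a\in L_\Gamma\cup\{\varepsilon\}}a\mathbf{1}_{C_a}\circ\sigma^{n-1}(x)$ such that, for all $a\in L_\Gamma$, the set $C_a$ is a finite (possibly empty) union of generalized cylinders of $\Lambda$.
   Context: Alphabets and sequences: $A$ (and similarly $B$) is a countable discrete alphabet, finite or infinite. Let $\varepsilon$ be a new symbol (the empty letter), $\tilde A=A\cup\{\varepsilon\}$. Put $\Sigma_A^{\mathrm{inf}}=A^{\mathbb N}$ and let $\Sigma_A^{\mathrm{fin}}$ be the set of sequences $(x_i)_{i\in\mathbb N}$ in $\tilde A$ containing at least one $\varepsilon$ such that $x_i=\varepsilon$ implies $x_{i+1}=\varepsilon$. The Ott–Tomforde–Willis full shift is $\Sigma_A=\Sigma_A^{\mathrm{inf}}$ if $A$ is finite and $\Sigma_A=\Sigma_A^{\mathrm{inf}}\cup\Sigma_A^{\mathrm{fin}}$ if $A$ is infinite. The length of $x$ is $l(x)=\min\{k-1: x_k=\varepsilon\}$ ($=\infty$ for $x\in A^{\mathbb N}$); a finite sequence of length $k$ is identified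 with the word $x_1\dots x_k$; the constant sequence $\mathcal O=(\varepsilon\varepsilon\varepsilon\dots)$ is the empty sequence (length $0$). For $x\in\Sigma_A^{\mathrm{fin}}$ and finite $F\subset A$, the generalized cylinder is $Z(x,F)=\{y\in\Sigma_A: y_i=x_i \text{ for } 1\le i\le l(x),\ y_{l(x)+1}\notin F\}$, and $Z(x):=Z(x,\emptyset)$. $\Sigma_A$ carries the topology generated by the generalized cylinders (it is compact, metrizable). The shift map is $\sigma((x_i)_{i})=(x_{i+1})_i$ (so $\sigma(\mathcal O)=\mathcal O$). For $\Lambda\subseteq\Sigma_A$: $\Lambda^{\mathrm{fin}}=\Lambda\cap\Sigma_A^{\mathrm{fin}}$, $\Lambda^{\mathrm{inf}}=\Lambda\cap\Sigma_A^{\mathrm{inf}}$; $B_n(\Lambda)\subseteq\tilde A^n$ is the set of words of length $n$ occurring as consecutive subblocks of elements of $\Lambda$, $B(\Lambda)=\bigcup_{n\ge1}B_n(\Lambda)$, and $L_\Lambda=B_1(\Lambda)\setminus\{\varepsilon\}$. For a word $a\in B_n(\Lambda)$, its follower set is $\mathcal F(\Lambda,a)=\{b\in B_1(\Lambda): ab\in B_{n+1}(\Lambda)\}$. A shift space is $\Lambda\subseteq\Sigma_A$ that is closed, satisfies $\sigma(\Lambda)\subseteq\Lambda$, and has the infinite extension property: $\mathcal O\in\Lambda$ iff $L_\Lambda$ is infinite, and a finite sequence $x\neq\mathcal O$ lies in $\Lambda$ iff $|\mathcal F(\Lambda,x)|=\infty$. Generalized cylinders of $\Lambda$ are the sets $Z(x,F)\cap\Lambda$.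 Finitely defined sets: $C\subseteq\Lambda$ is finitely defined in $\Lambda$ if there exist $I,J\subseteq\mathbb N$, integers $\ell_i,n_j\ge0$ and words $b_i,d_j\in B(\Sigma_A)$ ($i\in I$, $j\in J$) with $C=\{x\in\Lambda: (x_1\dots x_{1+\ell_i})=b_i\text{ for some } i\in I\}$ and $\Lambda\setminus C=\{x\in\Lambda: (x_1\dots x_{1+n_j})=d_j \text{ for some } j\in J\}$; its anticipation is $\sup_i\ell_i$. Sliding block codes: given a partition $\{C_a\}_{a\in B\cup\{\varepsilon\}}$ of a shift space $\Lambda\subseteq\Sigma_A$ such that each $C_a$ is finitely defined in $\Lambda$ and $\sigma(C_\varepsilon)\subseteq C_\varepsilon$, the map $\Phi:\Lambda\to\Sigma_B$ with $(\Phi(x))_n=\sum_{a}a\mathbf 1_{C_a}(\sigma^{n-1}(x))$ (i.e. $(\Phi(x))_n$ is the unique $a$ with $\sigma^{n-1}(x)\in C_a$) is called a sliding block code. Here $\mathcal O$ in $\Phi(\mathcal O)=\mathcal O$ and $\Phi^{-1}(\mathcal O)$ denotes the respective empty sequences of $\Sigma_A$ and $\Sigma_B$. *)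

(* Defs.v *)
(* Sequences are indexed from 0 (the paper's x_1 is x 0). *)
From mathcomp Require Import all_boot.
Set Implicit Arguments. Unset Strict Implicit. Unset Printing Implicit Defensive.

Section OTW.
Variable A : countType.

(* elements of \tilde A^N ; None is the empty letter epsilon *)
Definition sq := nat -> option A.

Definition finite_alph : Prop := exists s : seq A, forall a : A, a \in s.

Definition infinite_oset (P : option A -> Prop) : Prop :=
  ~ exists s : seq (option A), forall b, P b -> b \in s.
Definition infinite_set (P : A -> Prop) : Prop :=
  ~ exists s : seq A, forall b, P b -> b \in s.

Definition inf_seq (x : sq) : Prop := forall n, x n <> None.
Definition fin_seq (x : sq) : Prop :=
  (exists i, x i = None) /\ (forall i, x i = None -> x i.+1 = None).

Definition SigmaA (x : sq) : Prop := inf_seq x \/ (~ finite_alph /\ fin_seq x).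

Definition emptyseq : sq := fun _ => None.

Definition shift (x : sq) : sq := fun n => x n.+1.

Definition cyl (w : seq A) (F : seq A) (y : sq) : Prop :=
  SigmaA y /\ (forall i, i < size w -> y i = nth None (map Some w) i) /\
  (match y (size w) with None => True | Some c => c \notin F end).

Definition openA (U : sq -> Prop) : Prop :=
  (forall x, U x -> SigmaA x) /\
  forall y, U y -> exists cs : seq (seq A * seq A),
    (forall c, c \in cs -> cyl c.1 c.2 y) /\
    (forall z, SigmaA z -> (forall c, c \in cs -> cyl c.1 c.2 z) -> U z).

Definition closedA (L : sq -> Prop) : Prop :=
  (forall x, L x -> SigmaA x) /\ openA (fun x => SigmaA x /\ ~ L x).

Definition block (L : sq -> Prop) (w : seq (option A)) : Prop :=
  0 < size w /\ exists x, L x /\ exists i, forall j, j < size w -> x (i + j) = nth None w j.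

Definition letters (L : sq -> Prop) (a : A) : Prop := block L [:: Some a].

Definition follower (L : sq -> Prop) (w : seq (option A)) (b : option A) : Prop :=
  block L [:: b] /\ block L (w ++ [:: b]).

Definition prefix_of (x : sq) (w : seq (option A)) : Prop :=
  forall j, j < size w -> x j = nth None w j.

Definition shift_space (L : sq -> Prop) : Prop :=
  closedA L /\
  (forall x, L x -> L (shift x)) /\
  (L emptyseq <-> infinite_set (letters L)) /\
  (forall (x : sq) (k : nat), fin_seq x -> 0 < k -> x k = None ->
     (forall i, i < k -> x i <> None) ->
     (L x <-> infinite_oset (follower L (mkseq x k)))).

Definition fin_defined (L C : sq -> Prop) : Prop :=
  (forall x, C x -> L x) /\
  exists (I : nat -> Prop) (b : nat -> seq (option A))
         (J : nat -> Prop) (d : nat -> seq (option A)),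
    (forall i, I i -> block SigmaA (b i)) /\
    (forall j, J j -> block SigmaA (d j)) /\
    (forall x, C x <-> (L x /\ exists i, I i /\ prefix_of x (b i))) /\
    (forall x, (L x /\ ~ C x) <-> (L x /\ exists j, J j /\ prefix_of x (d j))).

Definition fin_union_cyl (L C : sq -> Prop) : Prop :=
  exists cs : seq (seq A * seq A),
    forall x, C x <-> (L x /\ exists c, c \in cs /\ cyl c.1 c.2 x).

End OTW.

Arguments emptyseq {A}.

Definition continuous_on (A B : countType) (L : sq A -> Prop) (Phi : sq A -> sq B) : Prop :=
  forall V : sq B -> Prop, openA V ->
    exists U : sq A -> Prop, openA U /\ forall x, L x -> (V (Phi x) <-> U x).

(* Main.v *)
Require Import Defs.
From mathcomp Require Import all_boot.
From Stdlib Require Import Classical ClassicalEpsilon.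
Set Implicit Arguments. Unset Strict Implicit. Unset Printing Implicit Defensive.

Section Gen.
Variable A : countType.
Implicit Types (x y z : sq A) (L C : sq A -> Prop).

Definition cyls (cs : seq (seq A * seq A)) (y : sq A) : Prop :=
  forall c, c \in cs -> cyl c.1 c.2 y.

Definition nbhd L x (P : sq A -> Prop) : Prop :=
  exists cs, cyls cs x /\ forall y, L y -> cyls cs y -> P y.

Lemma cyls_cat cs1 cs2 y : cyls (cs1 ++ cs2) y <-> cyls cs1 y /\ cyls cs2 y.
Proof.
split.
  by move=> H; split=> c Hc; apply: H; rewrite mem_cat Hc ?orbT.
by case=> H1 H2 c; rewrite mem_cat => /orP[] Hc; [apply: H1|apply: H2].
Qed.

Lemma SigmaA_shift x : SigmaA x -> SigmaA (shift x).
Proof.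
case=> [Hi|[Hf [[i Hi] Hs]]]; [left=> n; exact: Hi|right; split=> //].
split; first by exists i; rewrite /shift Hs.
by move=> j; rewrite /shift; apply: Hs.
Qed.

Lemma fin_none x k : SigmaA x -> x k = None -> forall n, k <= n -> x n = None.
Proof.
case=> [Hi|[_ [_ Hs]]] Hk; first by case: (Hi k).
move=> n; elim: n => [|n IH]; first by rewrite leqn0 => /eqP <-.
rewrite leq_eqVlt => /orP[/eqP <- //|]; rewrite ltnS => /IH; exact: Hs.
Qed.

Lemma iter_shift n x m : iter n (@shift A) x m = x (n + m).
Proof.
elim: n x m => [//|n IH] x m; by rewrite iterSr IH /shift addSn.
Qed.

Lemma iter_SigmaA n x : SigmaA x -> SigmaA (iter n (@shift A) x).
Proof. by elim: n => [//|n IH] Hx /=; apply: SigmaA_shift; apply: IH. Qed.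

Lemma cyl_cons a w F y : SigmaA y ->
  (cyl (a :: w) F y <-> y 0 = Some a /\ cyl w F (shift y)).
Proof.
move=> Hy; split.
  case=> _ [Hp Hm]; split; first exact: (Hp 0).
  split; first exact: SigmaA_shift.
  split=> //; move=> i Hi; rewrite /shift (Hp i.+1) //.
case=> H0 [_ [Hp Hm]]; split=> //; split=> //.
by case=> [|i] //= Hi; apply: (Hp i).
Qed.

Lemma shift_nbhd n x cs' : SigmaA x -> (forall j, j < n -> x j <> None) ->
  cyls cs' (iter n (@shift A) x) ->
  exists cs, cyls cs x /\ forall y, cyls cs y -> cyls cs' (iter n (@shift A) y).
Proof.
elim: n x cs' => [|n IH] x cs' Hx Hn Hc; first by exists cs'.
rewrite iterSr in Hc.
have [cs'' [H1 H2]] := IH (shift x) cs' (SigmaA_shift Hx)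
  (fun j Hj => Hn j.+1 Hj) Hc.
case E: (x 0) => [a|]; last by case: (Hn 0 erefl).
exists (map (fun c => (a :: c.1, c.2)) cs''); split.
  move=> c /mapP[c0 Hc0 ->] /=; apply/cyl_cons => //; split=> //; exact: H1.
move=> y Hy; rewrite iterSr; apply: H2 => c Hc1.
have := Hy _ (map_f (fun c => (a :: c.1, c.2)) Hc1) => /= Hcy.
have Sy : SigmaA y by case: Hcy.
by case/(cyl_cons _ _ _ Sy): Hcy.
Qed.


Lemma nth_mapSome (w : seq A) i a0 : i < size w ->
  nth None (map Some w) i = Some (nth a0 w i).
Proof. by move=> Hi; rewrite (nth_map a0). Qed.

Lemma cyl_closed w F y : SigmaA y -> ~ cyl w F y ->
  exists cs, cyls cs y /\ forall z, cyls cs z -> ~ cyl w F z.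
Proof.
move=> Sy Hn.
case: (classic (forall i, i < size w -> y i = nth None (map Some w) i)) => Hp.
  case E: (y (size w)) => [f|]; last first.
    by exfalso; apply: Hn; split=> //; split=> //; rewrite E.
  have Hf : f \in F.
    apply/negPn/negP=> Hf; apply: Hn; split=> //; split=> //; by rewrite E.
  exists [:: (w ++ [:: f], [::])]; split.
    move=> c; rewrite inE => /eqP -> /=; split=> //; split=> //.
    move=> i; rewrite size_cat /= addn1 ltnS leq_eqVlt => /orP[/eqP ->|Hi].
      by rewrite map_cat nth_cat size_map ltnn subnn E.
    by rewrite map_cat nth_cat size_map Hi; apply: Hp.
    by case: (y _).
  move=> z Hz [_ [_ Hm]].
  have [_ [Hzp _]] := Hz _ (mem_head _ _).
  move: Hm; rewrite /= (Hzp (size w)); last by rewrite size_cat addn1.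
  by rewrite map_cat nth_cat size_map ltnn subnn /= Hf.
have [i Hi] : exists i, (i < size w) && (y i != nth None (map Some w) i).
  apply: NNPP => Hne; apply: Hp => i Hi; apply/eqP; apply: negbNE; apply/negP => Hne2.
  by apply: Hne; exists i; rewrite Hi.
pose P i := (i < size w) && (y i != nth None (map Some w) i).
have exP : exists i, P i by exists i.
pose k := ex_minn exP.
have Pk : P k by rewrite /k; case: ex_minnP.
have mk : forall j, j < k -> y j = nth None (map Some w) j.
  move=> j Hj; apply/eqP; apply: negbNE; apply/negP => Hne.
  have Pj : P j by rewrite /P Hne andbT (ltn_trans Hj) //; case/andP: Pk.
  by move: Hj; rewrite /k; case: ex_minnP => m _ /(_ j Pj); rewrite leqNgt => /negP.
case/andP: Pk => Hks Hky.
have [a0 _] : exists a0 : A, True by case: (w) Hks => [|a0 ?] //; exists a0.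
have Hsz : size (take k w) = k by rewrite size_take Hks.
exists [:: (take k w, [:: nth a0 w k])]; split.
  move=> c; rewrite inE => /eqP -> /=; split=> //; split.
    move=> j; rewrite Hsz => Hj; rewrite map_take nth_take //; exact: mk.
  rewrite Hsz; case E: (y k) => [c1|] //; rewrite inE; apply/eqP => Ec.
  by move: Hky; rewrite E Ec (nth_mapSome a0 Hks) eqxx.
move=> z Hz [_ [Hzp _]].
have [_ [_ Hm]] := Hz _ (mem_head _ _).
move: Hm; rewrite /= Hsz (Hzp k Hks) (nth_mapSome a0 Hks).
by rewrite inE eqxx.
Qed.

Lemma cyls_closed (cs0 : seq (seq A * seq A)) y : SigmaA y -> (forall c, c \in cs0 -> ~ cyl c.1 c.2 y) ->
  exists cs, cyls cs y /\ forall z, cyls cs z -> forall c, c \in cs0 -> ~ cyl c.1 c.2 z.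
Proof.
move=> Sy; elim: cs0 => [|c0 cs0 IH] Hn.
  by exists [::]; split=> // z _ c.
have [cs1 [H1 H1']] := cyl_closed Sy (Hn _ (mem_head _ _)).
have [cs2 [H2 H2']] := IH (fun c Hc => Hn c ltac:(by rewrite inE Hc orbT)).
exists (cs1 ++ cs2); split; first by apply/cyls_cat.
move=> z /cyls_cat [Hz1 Hz2] c; rewrite inE => /orP[/eqP ->|Hc].
  exact: H1'.
exact: H2'.
Qed.

Lemma nbhd_True L x : nbhd L x (fun _ => True).
Proof. by exists [::]. Qed.

Lemma nbhd_mono L x (P Q : sq A -> Prop) : nbhd L x P ->
  (forall y, L y -> P y -> Q y) -> nbhd L x Q.
Proof. by case=> cs [H1 H2] HPQ; exists cs; split=> // y Ly Hy; apply: HPQ (H2 _ Ly Hy). Qed.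

Lemma nbhd_and L x (P Q : sq A -> Prop) : nbhd L x P -> nbhd L x Q ->
  nbhd L x (fun y => P y /\ Q y).
Proof.
case=> cs1 [H1 H1'] [cs2 [H2 H2']]; exists (cs1 ++ cs2); split; first by apply/cyls_cat.
by move=> y Ly /cyls_cat [? ?]; split; [apply: H1'|apply: H2'].
Qed.

Lemma nbhd_lt L x (P : nat -> sq A -> Prop) n : (forall j, j < n -> nbhd L x (P j)) ->
  nbhd L x (fun y => forall j, j < n -> P j y).
Proof.
elim: n => [|n IH] H; first by exists [::]; split=> // y _ _ j.
have := nbhd_and (IH (fun j Hj => H j (ltnW Hj))) (H n (ltnSn n)).
move=> Hn; apply: (nbhd_mono Hn) => y _ [H1 H2] j; rewrite ltnS leq_eqVlt => /orP[/eqP ->|]//.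
exact: H1.
Qed.

Lemma nbhd_seq (T : eqType) L x (P : T -> sq A -> Prop) (s : seq T) :
  (forall t, t \in s -> nbhd L x (P t)) ->
  nbhd L x (fun y => forall t, t \in s -> P t y).
Proof.
elim: s => [|t s IH] H; first by exists [::]; split=> // y _ _ t.
have := nbhd_and (IH (fun u Hu => H u ltac:(by rewrite inE Hu orbT))) (H t (mem_head _ _)).
by move=> Hn; apply: (nbhd_mono Hn) => y _ [H1 H2] u; rewrite inE => /orP[/eqP ->|]//; apply: H1.
Qed.

Definition maxs (cs : seq (seq A * seq A)) := foldr (fun c n => maxn (size c.1) n) 0 cs.

Lemma maxs_ge cs c : c \in cs -> size c.1 <= maxs cs.
Proof.
elim: cs => [|c0 cs IH] //; rewrite inE => /orP[/eqP ->|Hc] /=; first exact: leq_maxl.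
exact: leq_trans (IH Hc) (leq_maxr _ _).
Qed.

Lemma cyl_agree v F x y : cyl v F x -> SigmaA y ->
  (forall j, j <= size v -> y j = x j) -> cyl v F y.
Proof.
case=> _ [Hp Hm] Sy Ha; split=> //; split; last by rewrite Ha.
by move=> i Hi; rewrite Ha ?(ltnW Hi) //; apply: Hp.
Qed.

Lemma cyls_agree cs x y : cyls cs x -> SigmaA y ->
  (forall j, j <= maxs cs -> y j = x j) -> cyls cs y.
Proof.
move=> Hx Sy Ha c Hc; apply: cyl_agree (Hx _ Hc) Sy _ => j Hj.
by apply: Ha; apply: leq_trans Hj (maxs_ge Hc).
Qed.

Lemma nbhd_prefix L x P : (forall y, L y -> SigmaA y) -> nbhd L x P ->
  exists N, forall y, L y -> (forall j, j <= N -> y j = x j) -> P y.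
Proof.
move=> LS [cs [H1 H2]]; exists (maxs cs) => y Ly Ha.
by apply: H2 => //; apply: cyls_agree H1 (LS _ Ly) Ha.
Qed.

Lemma fin_def_of L C : (forall y, L y -> SigmaA y) -> (forall y, C y -> L y) ->
  (forall x, C x -> exists N, forall y, L y -> (forall j, j <= N -> y j = x j) -> C y) ->
  (forall x, L x -> ~ C x -> exists N, forall y, L y -> (forall j, j <= N -> y j = x j) -> ~ C y) ->
  fin_defined L C.
Proof.
move=> LS CL H1 H2; split=> //.
pose b i := odflt [::] (unpickle i : option (seq (option A))).
have bK : forall w, b (pickle w) = w by move=> w; rewrite /b pickleK.
have blk : forall x N, SigmaA x -> block (@SigmaA A) (mkseq x N.+1).
  move=> x N Sx; split; first by rewrite size_mkseq.
  by exists x; split=> //; exists 0 => j; rewrite size_mkseq => Hj; rewrite nth_mkseq.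
have pre : forall x y N, prefix_of y (mkseq x N.+1) <-> (forall j, j <= N -> y j = x j).
  move=> x y N; split=> H j; rewrite ?size_mkseq => Hj.
    by rewrite H ?size_mkseq // nth_mkseq.
  by rewrite nth_mkseq // H.
exists (fun i => block (@SigmaA A) (b i) /\ forall y, L y -> prefix_of y (b i) -> C y), b.
exists (fun i => block (@SigmaA A) (b i) /\ forall y, L y -> prefix_of y (b i) -> ~ C y), b.
split; first by move=> i [].
split; first by move=> i [].
split.
  move=> x; split.
    move=> Cx; split; first exact: CL.
    have [N HN] := H1 x Cx; exists (pickle (mkseq x N.+1)); rewrite bK.
    split; last by apply/pre=> j Hj.
    split; first exact/blk/LS/CL.
    by move=> y Ly /pre; apply: HN.
  by case=> Lx [i [[_ Hi] Hp]]; apply: Hi.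
move=> x; split.
  case=> Lx Cx; split=> //.
  have [N HN] := H2 x Lx Cx; exists (pickle (mkseq x N.+1)); rewrite bK.
  split; last by apply/pre=> j Hj.
  split; first exact/blk/LS.
  by move=> y Ly /pre; apply: HN.
by case=> Lx [i [[_ Hi] Hp]]; split=> //; apply: Hi.
Qed.


Definition pre (w : seq A) x := forall i, i < size w -> x i = nth None (map Some w) i.

Definition hom L C x := exists cs, cyls cs x /\
  ((forall z, L z -> cyls cs z -> C z) \/ (forall z, L z -> cyls cs z -> ~ C z)).

Definition good L C (w : seq A) := exists cs : seq (seq A * seq A),
  (forall c, c \in cs -> exists u, c.1 = w ++ u) /\
  (forall x, L x -> (exists2 c, c \in cs & cyl c.1 c.2 x) -> C x) /\
  (forall x, L x -> pre w x -> C x -> exists2 c, c \in cs & cyl c.1 c.2 x).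

Lemma cyl_pre w u F x : cyl (w ++ u) F x -> pre w x.
Proof.
case=> _ [Hp _] i Hi; rewrite Hp ?size_cat ?(leq_trans Hi (leq_addr _ _)) //.
by rewrite map_cat nth_cat size_map Hi.
Qed.

Lemma pre_rcons w c x : pre w x -> x (size w) = Some c -> pre (rcons w c) x.
Proof.
move=> Hp Hx i; rewrite size_rcons ltnS leq_eqVlt -cats1 map_cat nth_cat size_map.
case/orP=> [/eqP ->|Hi]; first by rewrite ltnn subnn.
by rewrite Hi; apply: Hp.
Qed.

Lemma hom_all L C : closedA L -> (forall y, C y -> L y) ->
  (forall x, L x -> C x -> nbhd L x C) ->
  (forall x, L x -> ~ C x -> nbhd L x (fun z => ~ C z)) ->
  forall x, SigmaA x -> hom L C x.
Proof.
case=> LS [_ Hop] CL H1 H2 x Sx.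
case: (classic (L x)) => Lx.
  case: (classic (C x)) => Cx.
    by have [cs [? ?]] := H1 x Lx Cx; exists cs; split=> //; left.
  by have [cs [? ?]] := H2 x Lx Cx; exists cs; split=> //; right.
have [cs [Hc Hz]] := Hop x (conj Sx Lx); exists cs; split=> //; left=> z Lz Hcz.
by case: (Hz z (LS _ Lz) Hcz).
Qed.

Lemma good_comb L C w : (forall c, good L C (rcons w c)) -> forall s : seq A,
  exists cs : seq (seq A * seq A),
  (forall c, c \in cs -> exists u, c.1 = w ++ u) /\
  (forall x, L x -> (exists2 c, c \in cs & cyl c.1 c.2 x) -> C x) /\
  (forall x, L x -> forall c, c \in s -> pre (rcons w c) x -> C x ->
     exists2 c, c \in cs & cyl c.1 c.2 x).
Proof.
move=> Hg; elim=> [|a s IH].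
  by exists [::]; split=> //; split=> // x _ [c].
have [cs [I1 [I2 I3]]] := IH.
have [cs' [J1 [J2 J3]]] := Hg a.
exists (cs' ++ cs); split.
  move=> c; rewrite mem_cat => /orP[/J1 [u ->]|/I1 //].
  by exists (a :: u); rewrite -cat_rcons.
split.
  move=> x Lx [c]; rewrite mem_cat => /orP[Hc Hx|Hc Hx].
    by apply: J2 => //; exists c.
  by apply: I2 => //; exists c.
move=> x Lx c; rewrite inE => /orP[/eqP ->|Hc] Hp Cx.
  by have [c' ? ?] := J3 x Lx Hp Cx; exists c' => //; rewrite mem_cat; apply/orP; left.
by have [c' ? ?] := I3 x Lx c Hc Hp Cx; exists c' => //; rewrite mem_cat; apply/orP; right.
Qed.

Lemma good_step L C w : (forall y, L y -> SigmaA y) ->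
  (forall x, SigmaA x -> hom L C x) ->
  (forall c, good L C (rcons w c)) -> good L C w.
Proof.
move=> LS Hh Hg.
case: (classic (finite_alph A)) => [[s Hs]|Hinf].
  have [cs [I1 [I2 I3]]] := good_comb Hg s.
  exists cs; split=> //; split=> // x Lx Hp Cx.
  have Hix : inf_seq x by case: (LS _ Lx) => // [[Hf _]]; case: Hf; exists s.
  case E: (x (size w)) => [c|]; last by case: (Hix _ E).
  by apply: (I3 x Lx c (Hs c)) => //; apply: pre_rcons.
pose xw : sq A := fun i => nth None (map Some w) i.
have Sxw : SigmaA xw.
  right; split=> //; split.
    by exists (size w); rewrite /xw nth_default // size_map.
  move=> i; rewrite /xw => Hi.
  case: (ltnP i (size w)) => H; last by rewrite nth_default // size_map; exact: leq_trans H (leqnSn _).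
  have [a _] : exists a : A, True by case: (w) H => // a ? _; exists a.
  by rewrite (nth_map a) in Hi.
have [cs0 [Hc0 Hd]] := Hh xw Sxw.
pose F2 := flatten (map snd cs0).
have K : forall y, SigmaA y -> pre w y ->
    (match y (size w) with None => True | Some c => is_true (c \notin F2) end) -> cyls cs0 y.
  move=> y Sy Hp Hm [v F] Hvf; have [_ [Hv Hvm]] := Hc0 _ Hvf; rewrite /= in Hv Hvm *.
  have Hsz : size v <= size w.
    rewrite leqNgt; apply/negP => Hlt; have := Hv _ Hlt; rewrite /xw nth_default ?size_map //.
    have [a _] : exists a : A, True by case: (v) Hlt => // a ? _; exists a.
    by rewrite (nth_map a).
  split=> //; split.
    move=> i Hi; rewrite Hp ?(leq_trans Hi Hsz) //; exact: Hv.
  move: Hsz; rewrite leq_eqVlt => /orP[/eqP Heq|Hlt].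
    rewrite Heq; move: Hm; case: (y (size w)) => // c Hc; apply/negP => HcF.
    move/negP: Hc; apply; apply/flattenP; exists F => //; apply/mapP; exists (v, F) => //.
  by move: Hvm; rewrite Hp //.
have [cs [I1 [I2 I3]]] := good_comb Hg F2.
case: Hd => Hd.
  exists ((w, F2) :: cs); split.
    move=> c; rewrite inE => /orP[/eqP ->|/I1 //]; by exists [::]; rewrite cats0.
  split.
    move=> x Lx [c]; rewrite inE => /orP[/eqP ->|Hc] Hx.
      case: Hx => Sx [Hp Hm]; exact: (Hd x Lx (K x Sx Hp Hm)).
    by apply: I2 => //; exists c.
  move=> x Lx Hp Cx.
  case E: (x (size w)) => [c|].
    case: (boolP (c \in F2)) => HcF.
      by have [c' ? ?] := I3 x Lx c HcF (pre_rcons Hp E) Cx; exists c' => //; rewrite inE; apply/orP; right.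
    by exists (w, F2); [exact: mem_head|split; [exact: LS|split=> //; rewrite E]].
  by exists (w, F2); [exact: mem_head|split; [exact: LS|split=> //; rewrite E]].
exists cs; split=> //; split=> // x Lx Hp Cx.
case E: (x (size w)) => [c|].
  case: (boolP (c \in F2)) => HcF.
    exact: I3 x Lx c HcF (pre_rcons Hp E) Cx.
  by case: (Hd x Lx (K x (LS _ Lx) Hp ltac:(rewrite E //))).
by case: (Hd x Lx (K x (LS _ Lx) Hp ltac:(rewrite E //))).
Qed.


Lemma good_nil L C : (forall y, L y -> SigmaA y) ->
  (forall x, SigmaA x -> hom L C x) -> good L C [::].
Proof.
move=> LS Hh; apply: NNPP => Hb.
have step : forall w, ~ good L C w -> exists c, ~ good L C (rcons w c).
  move=> w Hw; apply: NNPP => Hn; apply: Hw; apply: good_step => // c.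
  by apply: NNPP => Hc; apply: Hn; exists c.
have [a0 _] := step _ Hb.
pose f w := epsilon (inhabits a0) (fun c => ~ good L C w -> ~ good L C (rcons w c)).
have fP : forall w, ~ good L C w -> ~ good L C (rcons w (f w)).
  move=> w; exact: (epsilon_spec (inhabits a0) (fun c => ~ good L C w -> ~ good L C (rcons w c)) ltac:(case: (classic (good L C w)) => Hw; [by exists a0|by have [c Hc] := step w Hw; exists c])).

pose p := fix p n := if n is n'.+1 then rcons (p n') (f (p n')) else [::].
have pbad : forall n, ~ good L C (p n) by elim=> [|n IH] //=; apply: fP.
pose a i := f (p i).
have pE : forall n, p n = mkseq a n by elim=> [|n IH] //; rewrite mkseqS -IH.
pose x : sq A := fun i => Some (a i).
have Sx : SigmaA x by left.
have [cs0 [Hc0 Hd]] := Hh x Sx.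
pose N := (maxs cs0).+1.
have K : forall y, SigmaA y -> pre (mkseq a N) y -> cyls cs0 y.
  move=> y Sy Hp; apply: cyls_agree Hc0 Sy _ => j Hj.
  rewrite Hp ?size_mkseq // (nth_map a0) ?size_mkseq // nth_mkseq //.
apply: (pbad N); rewrite pE.
case: Hd => Hd.
  exists [:: (mkseq a N, [::])]; split.
    by move=> c; rewrite inE => /eqP ->; exists [::]; rewrite cats0.
  split.
    move=> y Ly [c]; rewrite inE => /eqP -> /= [Sy [Hp _]].
    exact: Hd y Ly (K y Sy Hp).
  move=> y Ly Hp Cy; exists (mkseq a N, [::]); first exact: mem_head.
  by split; [exact: LS|split=> //=; case: (y _)].
exists [::]; split=> //; split; first by move=> y _ [c].
by move=> y Ly Hp Cy; case: (Hd y Ly (K y (LS _ Ly) Hp)).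
Qed.

Lemma compact_clopen L C : closedA L -> (forall y, C y -> L y) ->
  (forall x, L x -> C x -> nbhd L x C) ->
  (forall x, L x -> ~ C x -> nbhd L x (fun z => ~ C z)) ->
  fin_union_cyl L C.
Proof.
move=> Lc CL H1 H2.
have LS := proj1 Lc.
have [cs [_ [I2 I3]]] := good_nil LS (hom_all Lc CL H1 H2).
exists cs => x; split.
  move=> Cx; split; first exact: CL.
  by have [c ? ?] := I3 x (CL _ Cx) (fun i (Hi : i < 0) => ltac:(by [])) Cx; exists c.
by case=> Lx [c [Hc Hx]]; apply: I2 => //; exists c.
Qed.


Lemma openA_cyl (w F : seq A) : openA (cyl w F).
Proof.
split; first by move=> x [].
move=> y Hy; exists [:: (w, F)]; split; first by move=> c; rewrite inE => /eqP ->.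
by move=> z _ H; exact: (H _ (mem_head _ _)).
Qed.

Lemma cyl1 (b : A) y : SigmaA y -> (cyl [:: b] [::] y <-> y 0 = Some b).
Proof.
move=> Sy; split; first by case=> _ [Hp _]; exact: (Hp 0).
by move=> H; split=> //; split; [case=> //|case: (y 1)].
Qed.

Lemma cyl0 (b : A) y : SigmaA y -> (cyl [::] [:: b] y <-> y 0 <> Some b).
Proof.
move=> Sy; split.
  by case=> _ [_ /=]; case: (y 0) => // c; rewrite inE => Hc [E]; move: Hc; rewrite E eqxx.
move=> H; split=> //; split=> //=; case E: (y 0) => [c|] //; rewrite inE.
by apply/eqP => Ec; apply: H; rewrite E Ec.
Qed.

Lemma fin_defined_ext L C C' : fin_defined L C -> (forall x, C x <-> C' x) -> fin_defined L C'.
Proof.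
move=> [CL [I [b [J [d [Hb [Hd [H1 H2]]]]]]]] HC.
split; first by move=> x /HC; apply: CL.
exists I, b, J, d; split=> //; split=> //; split.
  by move=> x; rewrite -HC.
move=> x; rewrite -H2; split; case=> Lx Hx; split=> // Cx; apply: Hx; exact/HC.
Qed.

End Gen.

From Stdlib Require Import FunctionalExtensionality.

Theorem mainTheorem1 (A B : countType) (L : sq A -> Prop) (G : sq B -> Prop)
    (Phi : sq A -> sq B) :
  shift_space L -> shift_space G ->
  (forall x, L x -> G (Phi x)) ->
  (L emptyseq -> Phi emptyseq = emptyseq) ->
  fin_defined L (fun x => L x /\ Phi x = emptyseq) ->
  ((continuous_on L Phi /\
    (forall x, L x -> forall n, Phi (shift x) n = shift (Phi x) n))
   <->
   (exists C : option B -> sq A -> Prop,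
      (* {C_a} partition of L indexed by L_G u {eps} *)
      (forall a x, C a x -> L x) /\
      (forall x, L x -> exists a, C a x /\ forall a', C a' x -> a' = a) /\
      (forall b : B, ~ letters G b -> forall x, ~ C (Some b) x) /\
      (forall a, fin_defined L (C a)) /\
      (forall x, C None x -> C None (shift x)) /\
      (* Phi is the sliding block code defined by the partition *)
      (forall x, L x -> forall n a, Phi x n = a <-> C a (iter n (@shift A) x)) /\
      (forall b : B, letters G b -> fin_union_cyl L (C (Some b))))).
Proof.
move=> HL HG PhiG Phi0 Hfd.
have LS : forall y, L y -> SigmaA y := HL.1.1.
have GS : forall y, G y -> SigmaA y := HG.1.1.
have Lsh : forall x, L x -> L (shift x) := HL.2.1.
have Liter : forall n x, L x -> L (iter n (@shift A) x).
  by elim=> [|n IH] x Lx //=; apply: Lsh; apply: IH.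
have PhiS : forall x, L x -> SigmaA (Phi x) by move=> x Lx; apply: GS; apply: PhiG.
have Pnone : forall x, L x -> Phi x 0 = None -> Phi x = emptyseq.
  move=> x Lx H0; apply: functional_extensionality => n.
  exact: (fin_none (PhiS x Lx) H0).
split.
  case=> Hcont Hcomm.
  have Phi_iter : forall n x, L x -> forall m, Phi (iter n (@shift A) x) m = Phi x (n + m).
    elim=> [|n IH] x Lx m //; rewrite iterSr IH ?Hcomm //; last exact: Lsh.
  have ropen : forall (V : sq B -> Prop) (P : sq A -> Prop), openA V ->
      (forall x, L x -> (V (Phi x) <-> P x)) -> forall x, L x -> P x -> nbhd L x P.
    move=> V P HV HVP x Lx Px.
    have [U [[_ Hop] HUe]] := Hcont V HV.
    have [cs [Hcs Hz]] := Hop x (proj1 (HUe x Lx) (proj2 (HVP x Lx) Px)).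
    exists cs; split=> // y Ly Hy; apply: (proj1 (HVP y Ly)); apply: (proj2 (HUe y Ly)); apply: Hz => //; exact: LS.
  have rEq : forall b x, L x -> (L x /\ Phi x 0 = Some b) -> nbhd L x (fun y => L y /\ Phi y 0 = Some b).
    move=> b x Lx Px; apply: (ropen (cyl [:: b] [::])) => //; first exact: openA_cyl.
    move=> y Ly; split=> [/(cyl1 _ (PhiS y Ly)) H|[_ H]]; [by split|exact/(cyl1 _ (PhiS y Ly))].
  have rNeq : forall b x, L x -> ~ (L x /\ Phi x 0 = Some b) -> nbhd L x (fun y => ~ (L y /\ Phi y 0 = Some b)).
    move=> b x Lx Px; apply: (ropen (cyl [::] [:: b])) => //; first exact: openA_cyl.
    move=> y Ly; split=> [/(cyl0 _ (PhiS y Ly)) H [_ H']|H]; first exact: H H'.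
    by apply/(cyl0 _ (PhiS y Ly)) => H'; apply: H.
  exists (fun a x => L x /\ Phi x 0 = a).
  split; first by move=> a x [].
  split; first by move=> x Lx; exists (Phi x 0); split=> // a' [].
  split.
    move=> b Hb x [Lx Hx]; apply: Hb; split=> //; exists (Phi x); split; first exact: PhiG.
    by exists 0; case=> // _; rewrite add0n Hx.
  split.
    case=> [b|].
      apply: fin_def_of => //; first by move=> y [].
        move=> x [Lx Hx]; apply: nbhd_prefix => //; exact: rEq.
      move=> x Lx Hx; apply: nbhd_prefix => //; exact: rNeq.
    apply: fin_defined_ext Hfd _ => x; split; case=> Lx H; split=> //.
      by rewrite H.
    exact: Pnone.
  split.
    move=> x [Lx Hx]; split; first exact: Lsh.
    by rewrite Hcomm // /shift (Pnone x Lx Hx).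
  split.
    move=> x Lx n a; rewrite Phi_iter // addn0; split=> [<-|[]//]; split=> //; exact: Liter.
  move=> b _; apply: compact_clopen; first exact: HL.1.
    by move=> y [].
    move=> x Lx Hx; exact: rEq.
  move=> x Lx Hx; exact: rNeq.
case=> C [H1 [H2 [H3 [H4 [H5 [H6 H7]]]]]].
have CNO : L emptyseq -> C None emptyseq.
  move=> LO; have := proj1 (H6 _ LO 0 None); apply; by rewrite Phi0.
have notO : forall x i, L x -> Phi x i <> None -> forall k, k <= i -> x k <> None.
  move=> x i Lx Hi k Hk Hxk; apply: Hi.
  have E : iter i (@shift A) x = emptyseq.
    apply: functional_extensionality => m; rewrite iter_shift.
    apply: (fin_none (LS x Lx) Hxk); exact: leq_trans Hk (leq_addr _ _).
  have LO : L emptyseq by rewrite -E; apply: Liter.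
  by apply/(H6 _ Lx); rewrite E; apply: CNO.
have LocEq : forall x i b, L x -> (forall j, j < i -> x j <> None) -> Phi x i = Some b ->
    nbhd L x (fun y => Phi y i = Some b).
  move=> x i b Lx Hj Hb.
  have Cb := proj1 (H6 _ Lx i (Some b)) Hb.
  case: (classic (letters G b)) => Hl; last by case: (H3 b Hl _ Cb).
  have [cs0 Hcs0] := H7 b Hl.
  have [_ [c [Hc Hcx]]] := proj1 (Hcs0 _) Cb.
  have [cs [Hcs Hy]] := shift_nbhd (LS _ Lx) Hj (cs' := [:: c])
    ltac:(by move=> c'; rewrite inE => /eqP ->).
  exists cs; split=> // y Ly Hy'; apply/(H6 _ Ly); apply/Hcs0; split; first exact: Liter.
  by exists c; split=> //; apply: (Hy y Hy'); exact: mem_head.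
have LocNeq : forall x i b, L x -> (forall j, j < i -> x j <> None) -> Phi x i <> Some b ->
    nbhd L x (fun y => Phi y i <> Some b).
  move=> x i b Lx Hj Hb.
  case: (classic (letters G b)) => Hl; last first.
    exists [::]; split=> // y Ly _ E; exact: (H3 b Hl _ (proj1 (H6 _ Ly i (Some b)) E)).
  have [cs0 Hcs0] := H7 b Hl.
  have Hn : forall c, c \in cs0 -> ~ cyl c.1 c.2 (iter i (@shift A) x).
    move=> c Hc Hcx; apply: Hb; apply/(H6 _ Lx); apply/Hcs0; split; first exact: Liter.
    by exists c.
  have [cs' [Hcs' Hz]] := cyls_closed (LS _ (Liter i x Lx)) Hn.
  have [cs [Hcs Hy]] := shift_nbhd (LS _ Lx) Hj Hcs'.
  exists cs; split=> // y Ly Hy' E.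
  have := proj1 (H6 _ Ly i (Some b)) E => /Hcs0 [_ [c [Hc Hcy]]].
  exact: (Hz _ (Hy y Hy') c Hc Hcy).
have cylN : forall x (w F : seq B), L x -> cyl w F (Phi x) -> nbhd L x (fun y => cyl w F (Phi y)).
  move=> x w F Lx [_ [Hp Hm]].
  have N1 : nbhd L x (fun y => forall j, j < size w -> Phi y j = nth None (map Some w) j).
    apply: nbhd_lt => j Hj.
    have [a _] : exists a : B, True by case: (w) Hj => // a ? _; exists a.
    rewrite (nth_map a) //; apply: LocEq => //; last by rewrite Hp // (nth_map a).
    move=> k Hk; apply: (notO x j) => //; first by rewrite Hp // (nth_map a).
    exact: ltnW.
  have N2 : nbhd L x (fun y => forall f, f \in F -> Phi y (size w) <> Some f).
    apply: nbhd_seq => f Hf; apply: LocNeq => //.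
      move=> k Hk; apply: (notO x (size w).-1) => //; last by rewrite -ltnS prednK // (leq_trans _ Hk).
      have [a _] : exists a : B, True by case: (w) Hk => // a ? _; exists a.
      by rewrite Hp ?(nth_map a) // prednK // (leq_trans _ Hk).
    by move=> E; move: Hm; rewrite E Hf.
  apply: (nbhd_mono (nbhd_and N1 N2)) => y Ly [Hy1 Hy2]; split; first exact: PhiS.
  split=> //; case E: (Phi y (size w)) => [c|] //; apply/negP => Hc.
  exact: Hy2 c Hc E.
split.
  move=> V [VS Hop].
  exists (fun z => SigmaA z /\ exists x cs, L x /\ V (Phi x) /\ cyls cs x /\
            (forall y, L y -> cyls cs y -> V (Phi y)) /\ cyls cs z).
  split.
    split; first by move=> z [].
    move=> z [Sz [x [cs [Lx [Vx [Hx [Hall Hz]]]]]]]; exists cs; split=> //.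
    by move=> z' Sz' Hz'; split=> //; exists x, cs.
  move=> x Lx; split.
    move=> Vx; have [ds [Hds Hz]] := Hop _ Vx.
    have : nbhd L x (fun y => forall d, d \in ds -> cyl d.1 d.2 (Phi y)).
      apply: nbhd_seq => d Hd; apply: cylN => //; exact: Hds.
    case=> cs [Hcs Hy]; split; first exact: LS.
    exists x, cs; split=> //; split=> //; split=> //; split=> // y Ly Hy'.
    by apply: Hz; [exact: PhiS|exact: Hy].
  by case=> _ [x0 [cs [_ [_ [_ [Hall Hz]]]]]]; apply: Hall.
move=> x Lx n; rewrite /shift.
have E := proj1 (H6 _ Lx n.+1 (Phi x n.+1)) erefl.
by apply/(H6 _ (Lsh _ Lx)); rewrite -iterSr.
Qed.
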